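(* Let $A, B$ be $2n\times 2n$ real symmetric positive semidefinite matrices whose kernels are symplectic subspaces of $\mathbb{R}^{2n}$. If $d(A) \prec^w_+ d(B)$, then there exist a probability vector $(p(\pi))_{\pi\in S_n}$, symplectic matrices $K_\pi\in\operatorname{Sp}(2n)$ ($\pi\in S_n$) and $M\in\operatorname{Sp}(2n)$, and $2n\times 2n$ diagonal matrices $D_\pi$ ($\pi\in S_n$) with strictly positive diagonal entries, such that $$A = \sum_{\pi\in S_n} p(\pi)\,(K_\pi D_\pi M)^T B\, (K_\pi D_\pi M).$$
   Context: Let $J = \begin{bmatrix} 0 & I_n \\ -I_n & 0\end{bmatrix}$. A real $2n\times 2n$ matrix $M$ is symplectic if $M^TJM = J$; $\operatorname{Sp}(2n)$ denotes the group of such matrices. A linear subspace $W\subseteq\mathbb{R}^{2n}$ is symplectic if for every $0\neq u\in W$ there is $v\in W$ with $u^TJv\neq 0$. For a real symmetric positive semidefinite $2n\times 2n$ matrix $A$ whose kernel is a symplectic subspace, there is $M\in\operatorname{Sp}(2n)$ with $M^TAM = D\oplus D$ where $D$ is an $n\times n$ diagonal matrix with non-negative entries, unique up to permutation of its diagonal entries; these are the symplectic eigenvalues of $A$, and $d(A) = (d_1(A),\dots,d_n(A))$ denotes them in non-decreasing order. $S_n$ is the symmetric group on $\{1,\dots,n\}$. An $n\times n$ real matrix is doubly stochastic if its entries are non-negative and every row and column sums to $1$; an $n\times n$ real matrix $S=[s_{ij}]$ is doubly superstochastic if there is a doubly stochastic $E=[e_{ij}]$ with $s_{ij}\ge e_{ij}$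 for all $i,j$. For $x,y\in\mathbb{R}^n$, $x\prec^w_+ y$ means $x = Sy$ for some doubly superstochastic $n\times n$ matrix $S$ all of whose entries are strictly positive. *)

(* Defs.v *)
From HB Require Import structures.
From mathcomp Require Import all_boot all_order all_algebra all_fingroup.
From mathcomp Require Import reals.
Set Implicit Arguments. Unset Strict Implicit. Unset Printing Implicit Defensive.
Import Order.TTheory GRing.Theory Num.Theory.
Local Open Scope ring_scope.

Section Defs.
Variable R : realType.
Variable n : nat.

Definition Jmx : 'M[R]_(n + n) := block_mx 0 1%:M (- 1%:M) 0.

Definition symplectic (M : 'M[R]_(n + n)) : Prop := M^T *m Jmx *m M = Jmx.

Definition sym_psd (A : 'M[R]_(n + n)) : Prop :=
  A^T = A /\ forall x : 'cV[R]_(n + n), 0 <= (x^T *m A *m x) 0 0.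

Definition ker_symplectic (A : 'M[R]_(n + n)) : Prop :=
  forall u : 'cV[R]_(n + n), A *m u = 0 -> u != 0 ->
    exists v : 'cV[R]_(n + n), A *m v = 0 /\ (u^T *m Jmx *m v) 0 0 != 0.

Definition symp_eigs (A : 'M[R]_(n + n)) (d : 'cV[R]_n) : Prop :=
  (forall i, 0 <= d i 0) /\
  (forall i j : 'I_n, (i <= j)%N -> d i 0 <= d j 0) /\
  exists M : 'M[R]_(n + n), symplectic M /\
    M^T *m A *m M = block_mx (diag_mx d^T) 0 0 (diag_mx d^T).

End Defs.

Definition doubly_stochastic (R : realType) (n : nat) (E : 'M[R]_n) : Prop :=
  (forall i j, 0 <= E i j) /\
  (forall i, \sum_j E i j = 1) /\ (forall j, \sum_i E i j = 1).

Definition doubly_superstochastic (R : realType) (n : nat) (S : 'M[R]_n) : Prop :=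
  exists E : 'M[R]_n, doubly_stochastic E /\ forall i j, E i j <= S i j.

Definition wsupmaj_pos (R : realType) (n : nat) (x y : 'cV[R]_n) : Prop :=
  exists S : 'M[R]_n, doubly_superstochastic S /\ (forall i j, 0 < S i j) /\
    x = S *m y.

(* Main.v *)
Require Import Defs.
From HB Require Import structures.
From mathcomp Require Import all_boot all_order all_algebra all_fingroup.
From mathcomp Require Import reals.
Import Order.TTheory GRing.Theory Num.Theory.
Local Open Scope ring_scope.

Lemma J_sq (R : realType) n : Jmx R n *m Jmx R n = - 1%:M.
Proof.
rewrite /Jmx mulmx_block !mul0mx !mulmx0 !mul1mx !mulmx1 !addr0 !add0r.
by rewrite [in RHS](scalar_mx_block n n) opp_block_mx oppr0.
Qed.

Lemma symp_mul {R : realType} {n} {A B : 'M[R]_(n+n)} :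
  symplectic A -> symplectic B -> symplectic (A *m B).
Proof.
rewrite /symplectic => hA hB.
by rewrite trmx_mul !mulmxA -(mulmxA B^T A^T) -(mulmxA B^T (A^T *m _)) hA hB.
Qed.

Lemma symp_inv {R : realType} {n} {M : 'M[R]_(n+n)} : symplectic M ->
  exists L, symplectic L /\ M *m L = 1%:M /\ L *m M = 1%:M.
Proof.
move=> hM; set L := - (Jmx R n *m M^T *m Jmx R n).
have LM : L *m M = 1%:M.
  by rewrite /L mulNmx -!mulmxA (mulmxA M^T) hM J_sq opprK.
have ML := mulmx1C LM.
exists L; split => //; rewrite /symplectic.
have h : (M *m L)^T *m Jmx R n *m (M *m L) = Jmx R n.
  by rewrite ML trmx1 mul1mx mulmx1.
rewrite -[RHS]h trmx_mul !mulmxA -(mulmxA L^T M^T) -(mulmxA L^T (M^T *m _)) hM.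
by [].
Qed.

Lemma symp_block {R : realType} {n} {P : 'M[R]_n} : P^T *m P = 1%:M ->
  symplectic (block_mx P 0 0 P).
Proof.
move=> hP; rewrite /symplectic /Jmx tr_block_mx !trmx0 !mulmx_block.
rewrite !mul0mx !mulmx0 !mulmx1 !addr0 !add0r !mulmxN hP.
by rewrite !mul0mx mulmx1 mulNmx hP.
Qed.

Theorem theorem3p2 (R : realType) (n : nat) (A B : 'M[R]_(n + n))
  (dA dB : 'cV[R]_n) :
  sym_psd A -> sym_psd B -> ker_symplectic A -> ker_symplectic B ->
  symp_eigs A dA -> symp_eigs B dB ->
  wsupmaj_pos dA dB ->
  exists (p : 'S_n -> R) (K : 'S_n -> 'M[R]_(n + n)) (M : 'M[R]_(n + n))
         (delta : 'S_n -> 'rV[R]_(n + n)),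
    (forall pi, 0 <= p pi) /\ \sum_(pi : 'S_n) p pi = 1 /\
    (forall pi, symplectic (K pi)) /\ symplectic M /\
    (forall pi j, 0 < delta pi 0 j) /\
    A = \sum_(pi : 'S_n) p pi *:
          ((K pi *m diag_mx (delta pi) *m M)^T *m B *m
           (K pi *m diag_mx (delta pi) *m M)).
Proof.
move=> _ _ _ _ [_ [_ [MA [sMA hA]]]] [_ [_ [MB [sMB hB]]]] [S [_ [Spos hdA]]].
have [L [sL [ML LM]]] := symp_inv sMA.
pose N : R := (#|'S_n|)%:R.
have N0 : 0 < N.
  rewrite ltr0n; apply/card_gt0P; by exists 1%g.
pose c (i j : 'I_n) : R := (#|[pred s : 'S_n | s i == j]|)%:R.
have c0 i j : 0 < c i j.
  rewrite ltr0n; apply/card_gt0P; exists (tperm i j); by rewrite inE /= tpermL.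
pose e (s : 'S_n) : 'rV[R]_n := \row_i Num.sqrt (N * S i (s i) / c i (s i)).
pose P (s : 'S_n) : 'M[R]_n := perm_mx (s^-1)%g.
exists (fun _ => N^-1), (fun s => MB *m block_mx (P s) 0 0 (P s)), L,
  (fun s => row_mx (e s) (e s)).
split; first by move=> _; rewrite invr_ge0 ltW.
split.
  rewrite sumr_const -mulr_natr mulVf //; exact: lt0r_neq0.
split.
  move=> s; apply: symp_mul sMB _; apply: symp_block.
  by rewrite /P tr_perm_mx -perm_mxM invgK mulgV perm_mx1.
split => //.
split.
  move=> s j; rewrite mxE; case: splitP => k _; rewrite mxE sqrtr_gt0;
  by apply: divr_gt0 => //; apply: mulr_gt0.
pose G := block_mx (diag_mx dA^T) 0 0 (diag_mx dA^T).
pose H := block_mx (diag_mx dB^T) 0 0 (diag_mx dB^T).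
have eA : A = L^T *m G *m L.
  have h1 : (MA *m L)^T *m A *m (MA *m L) = A.
    by rewrite ML trmx1 mul1mx mulmx1.
  by rewrite /G -hA -[LHS]h1 trmx_mul !mulmxA.
pose X (s : 'S_n) := diag_mx (e s) *m (P s)^T *m diag_mx dB^T *m P s *m diag_mx (e s).
have eT s : (MB *m block_mx (P s) 0 0 (P s) *m diag_mx (row_mx (e s) (e s)) *m L)^T
   *m B *m (MB *m block_mx (P s) 0 0 (P s) *m diag_mx (row_mx (e s) (e s)) *m L)
   = L^T *m block_mx (X s) 0 0 (X s) *m L.
  have -> : block_mx (X s) 0 0 (X s) = 
    (diag_mx (row_mx (e s) (e s)))^T *m (block_mx (P s) 0 0 (P s))^T *m H
       *m block_mx (P s) 0 0 (P s) *m diag_mx (row_mx (e s) (e s)).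
    rewrite tr_diag_mx diag_mx_row tr_block_mx !trmx0 /H.
    do 4 rewrite ?mulmx_block ?mul0mx ?mulmx0 ?addr0 ?add0r.
    by [].
  by rewrite /H -hB !trmx_mul !mulmxA.
under eq_bigr => s _ do rewrite eT scalemxAl scalemxAr.
rewrite -(mulmx_suml L) -(mulmx_sumr L^T) eA; congr (_ *m _ *m _).
have sumB (F : 'S_n -> 'M[R]_n) : \sum_s block_mx (F s) 0 0 (F s) =
    block_mx (\sum_s F s) 0 0 (\sum_s F s).
  apply: (big_rec3 (fun a b c => a = block_mx b 0 0 c)); first by rewrite block_mx0.
  by move=> s y1 y2 y3 _ ->; rewrite add_block_mx addr0.
under eq_bigr => s _ do rewrite scale_block_mx scaler0.
suff hX : diag_mx dA^T = \sum_s N^-1 *: X s by rewrite sumB /G hX.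
have Xe s i j : X s i j = (e s 0 i * e s 0 i * dB (s i) 0) *+ (i == j).
  rewrite /X /P tr_perm_mx invgK -!mulmxA mul_diag_mx mxE -row_permE mxE.
  rewrite mul_diag_mx mxE -row_permE mxE.
  rewrite !mxE permK.
  by case: (i == j); rewrite ?mulr1n ?mulr0n ?mulr0 // mulrA mulrAC.
apply/matrixP => i j; rewrite summxE !mxE.
under eq_bigr => s _ do rewrite mxE Xe.
have [eij|nij] := eqVneq i j; last first.
  by rewrite mulr0n big1 // => s _; rewrite mulr0n mulr0.
subst j.
have ee s : e s 0 i * e s 0 i = N * S i (s i) / c i (s i).
  by rewrite mxE -expr2 sqr_sqrtr // ltW // divr_gt0 // mulr_gt0.
have tt a b c' : N^-1 * (N * a / c' * b) = a / c' * b.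
  by rewrite !mulrA mulVf ?mul1r // lt0r_neq0.
under eq_bigr => s _ do rewrite mulr1n ee tt.
rewrite mulr1n hdA mxE (partition_big (fun s : 'S_n => s i) xpredT) //=.
apply: eq_bigr => j _.
rewrite (eq_bigr (fun _ => S i j / c i j * dB j 0)); last by move=> s /eqP ->.
rewrite sumr_const -mulr_natr.
have -> : #|(fun s : 'S_n => s i == j)| = #|[pred s : 'S_n | s i == j]|.
  by apply: eq_card.
rewrite -/(c i j) mulrAC divfK //; exact: lt0r_neq0.
Qed.
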